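(* Let $(t_k)_{k\in\mathbb{N}}$ be a strictly increasing sequence with $t_1=\pi/4$ and $t_k\to\pi/2$, let $v_k=(\cos t_k,\sin t_k)\in\mathbb{R}^2$, $a=(-2,2)$, $b=(2,2)$, and $C_1'=\{a\}$, $C_2'=\{b\}$, $C_3'=\overline{\mathrm{co}}\{v_k:k\in\mathbb{N}\}$. Let $k\in\mathbb{N}$ and $d_k=\frac{v_{k+1}-v_k}{\|v_{k+1}-v_k\|}$. Then for every point $c$ of the half-open segment $[v_k,v_{k+1})=\{(1-s)v_k+sv_{k+1}: s\in[0,1)\}$, the number $$\varepsilon(c)=1+\frac{\langle b-c,d_k\rangle}{\langle a-c,d_k\rangle}$$ is well defined and lies in $(0,1)$, and the triple $(a,b,c)$ is the support of an $\varepsilon(c)$-cycle $(u_1',u_2',u_3')$ for $C_1',C_2',C_3'$.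
   Context: For a nonempty closed convex set $C\subseteq\mathbb{R}^2$, $\Pi_C(u)$ denotes the Euclidean projection of $u$ onto $C$. For three nonempty closed convex sets $D_1,D_2,D_3$ and $\varepsilon\in(0,1]$, an $\varepsilon$-cycle is a triple $(u_1,u_2,u_3)$ with $u_1=u_3+\varepsilon(\Pi_{D_1}(u_3)-u_3)$, $u_2=u_1+\varepsilon(\Pi_{D_2}(u_1)-u_1)$, $u_3=u_2+\varepsilon(\Pi_{D_3}(u_2)-u_2)$; its support is the triple $(\Pi_{D_1}(u_3),\Pi_{D_2}(u_1),\Pi_{D_3}(u_2))$. $\overline{\mathrm{co}}$ denotes closed convex hull and $\langle\cdot,\cdot\rangle$ the Euclidean inner product. *)

(* Defs.v *)
From Stdlib Require Import Reals.
Open Scope R_scope.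

Definition pt := (R * R)%type.

Definition padd (x y : pt) : pt := (fst x + fst y, snd x + snd y).
Definition psub (x y : pt) : pt := (fst x - fst y, snd x - snd y).
Definition pscal (r : R) (x : pt) : pt := (r * fst x, r * snd x).
Definition dot (x y : pt) : R := fst x * fst y + snd x * snd y.
Definition pnorm (x : pt) : R := sqrt (dot x x).

Definition convex (C : pt -> Prop) : Prop :=
  forall x y (l : R), C x -> C y -> 0 <= l <= 1 ->
    C (padd (pscal (1 - l) x) (pscal l y)).

Definition closed (C : pt -> Prop) : Prop :=
  forall x, (forall e, 0 < e -> exists y, C y /\ pnorm (psub x y) < e) -> C x.

Definition clco (S : pt -> Prop) : pt -> Prop :=
  fun x => forall C, convex C -> closed C -> (forall y, S y -> C y) -> C x.

Definition is_proj (C : pt -> Prop) (u p : pt) : Prop :=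
  C p /\ forall q, C q -> pnorm (psub u p) <= pnorm (psub u q).

Definition eps_cycle_support (D1 D2 D3 : pt -> Prop) (eps : R)
  (u1 u2 u3 p1 p2 p3 : pt) : Prop :=
  0 < eps <= 1 /\
  is_proj D1 u3 p1 /\ is_proj D2 u1 p2 /\ is_proj D3 u2 p3 /\
  u1 = padd u3 (pscal eps (psub p1 u3)) /\
  u2 = padd u1 (pscal eps (psub p2 u1)) /\
  u3 = padd u2 (pscal eps (psub p3 u2)).

(* Main.v *)
Require Import Defs.
From Stdlib Require Import Reals Lra Lia Psatz.
Open Scope R_scope.

Lemma t_mono (t : nat -> R) (Hinc : forall n : nat, (1 <= n)%nat -> t n < t (S n)) :
  forall i j, (1 <= i)%nat -> (i <= j)%nat -> t i <= t j.
Proof.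
  intros i j hi hij. induction hij. lra.
  pose proof (Hinc m ltac:(lia)). lra.
Qed.

Lemma t_bounds (t : nat -> R)
  (Hinc : forall n : nat, (1 <= n)%nat -> t n < t (S n))
  (H1 : t 1%nat = PI / 4)
  (Hlim : Un_cv t (PI / 2)) :
  forall n, (1 <= n)%nat -> PI/4 <= t n < PI/2.
Proof.
  intros n hn. split.
  - rewrite <- H1. apply t_mono; auto.
  - destruct (Rlt_le_dec (t n) (PI/2)) as [h|h]; auto. exfalso.
    pose proof (Hinc n hn) as hs.
    destruct (Hlim (t (S n) - t n) ltac:(lra)) as [N HN].
    specialize (HN (max N (S n)) ltac:(lia)).
    pose proof (t_mono t Hinc (S n) (max N (S n)) ltac:(lia) ltac:(lia)).
    unfold Rdist in HN. rewrite Rabs_right in HN; lra.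
Qed.

Lemma trig_ineq tp tq u : PI/4 <= tp -> tp < tq -> tq < PI/2 ->
  PI/4 <= u < PI/2 -> (u <= tp \/ tq <= u) ->
  (sin tq - sin tp) * cos u + (cos tp - cos tq) * sin u <= cos tp * sin tq - sin tp * cos tq.
Proof.
  intros h1 h2 h3 h4 h5.
  assert (E: (sin tq - sin tp) * cos u + (cos tp - cos tq) * sin u =
     sin (tq - u) - sin (tp - u)) by (rewrite !sin_minus; ring).
  assert (E2: cos tp * sin tq - sin tp * cos tq = sin (tq - tp)) by (rewrite sin_minus; ring).
  rewrite E, E2.
  set (B := tq - tp).
  assert (sB : 0 <= sin B) by (apply sin_ge_0; unfold B; lra).
  pose proof (COS_bound B) as cB.
  destruct h5 as [h|h].
  - set (A := tp - u).
    replace (tq - u) with (A + B) by (unfold A, B; ring).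
    assert (sA : 0 <= sin A) by (apply sin_ge_0; unfold A; lra).
    pose proof (COS_bound A) as cA.
    rewrite sin_plus. nra.
  - set (A := u - tq).
    replace (tq - u) with (- A) by (unfold A; ring).
    replace (tp - u) with (- (A + B)) by (unfold A, B; ring).
    assert (sA : 0 <= sin A) by (apply sin_ge_0; unfold A; lra).
    pose proof (COS_bound A) as cA.
    rewrite !sin_neg, sin_plus. nra.
Qed.

Lemma half_convex (x c0 : pt) : convex (fun q => dot x (psub q c0) <= 0).
Proof.
  intros y z l hy hz hl. destruct x, y, z, c0. unfold dot, psub, padd, pscal in *; simpl in *.
  replace ((1 - l) * r1 + l * r3 - r5) with ((1-l)*(r1 - r5) + l*(r3-r5)) by ring.
  replace ((1 - l) * r2 + l * r4 - r6) with ((1-l)*(r2 - r6) + l*(r4-r6)) by ring.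
  nra.
Qed.

Lemma abs_le_pnorm1 (z : pt) : Rabs (fst z) <= pnorm z.
Proof.
  destruct z as [z1 z2]; unfold pnorm, dot; simpl.
  rewrite <- sqrt_Rsqr_abs. apply sqrt_le_1_alt. unfold Rsqr. nra.
Qed.
Lemma abs_le_pnorm2 (z : pt) : Rabs (snd z) <= pnorm z.
Proof.
  destruct z as [z1 z2]; unfold pnorm, dot; simpl.
  rewrite <- sqrt_Rsqr_abs. apply sqrt_le_1_alt. unfold Rsqr. nra.
Qed.

Lemma half_closed (x c0 : pt) : closed (fun q => dot x (psub q c0) <= 0).
Proof.
  intros q Hq.
  destruct (Rle_dec (dot x (psub q c0)) 0) as [h|h]; auto. exfalso.
  set (M := Rabs (fst x) + Rabs (snd x) + 1).
  assert (M > 0) by (unfold M; pose proof (Rabs_pos (fst x)); pose proof (Rabs_pos (snd x)); lra).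
  destruct (Hq (dot x (psub q c0) / M)) as [y [hy hn]].
  { apply Rdiv_lt_0_compat; lra. }
  pose proof (abs_le_pnorm1 (psub q y)) as n1.
  pose proof (abs_le_pnorm2 (psub q y)) as n2.
  set (N := pnorm (psub q y)) in *.
  assert (hN : N * M < dot x (psub q c0)).
  { apply (Rmult_lt_compat_r M) in hn; auto. unfold Rdiv in hn.
    rewrite Rmult_assoc, Rinv_l in hn; lra. }
  destruct x as [x1 x2], q as [q1 q2], y as [y1 y2], c0 as [c1 c2].
  unfold M, dot, psub in *; simpl in *.
  assert (x1 * (q1 - y1) <= Rabs x1 * N).
  { apply Rle_trans with (Rabs (x1 * (q1 - y1))). apply Rle_abs.
    rewrite Rabs_mult. apply Rmult_le_compat_l. apply Rabs_pos. auto. }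
  assert (x2 * (q2 - y2) <= Rabs x2 * N).
  { apply Rle_trans with (Rabs (x2 * (q2 - y2))). apply Rle_abs.
    rewrite Rabs_mult. apply Rmult_le_compat_l. apply Rabs_pos. auto. }
  assert (0 <= N) by (pose proof (Rabs_pos (q1 - y1)); lra).
  nra.
Qed.

Lemma proj_lemma (C : pt -> Prop) (c0 x : pt) :
  C c0 -> (forall q, C q -> dot x (psub q c0) <= 0) -> is_proj C (padd c0 x) c0.
Proof.
  intros hc hq. split; auto. intros q Cq. specialize (hq q Cq).
  unfold pnorm. apply sqrt_le_1_alt.
  destruct x as [x1 x2], q as [q1 q2], c0 as [c1 c2]; unfold dot, psub, padd in *; simpl in *.
  replace (c1 + x1 - q1) with (x1 - (q1 - c1)) by ring.
  replace (c2 + x2 - q2) with (x2 - (q2 - c2)) by ring.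
  replace (c1 + x1 - c1) with x1 by ring. replace (c2 + x2 - c2) with x2 by ring.
  pose proof (Rle_0_sqr (q1-c1)); pose proof (Rle_0_sqr (q2-c2)); unfold Rsqr in *; nra.
Qed.

Lemma cos_le_sin x : PI/4 <= x <= PI/2 -> cos x <= sin x.
Proof.
  intros h. pose proof PI_RGT_0. rewrite <- sin_shift.
  destruct (Rle_lt_or_eq_dec (PI/2 - x) x ltac:(lra)) as [h'|h'].
  - left. apply sin_increasing_1; lra.
  - rewrite h'. lra.
Qed.

Theorem proposition3 (t : nat -> R)
  (Hinc : forall n : nat, (1 <= n)%nat -> t n < t (S n))
  (H1 : t 1%nat = PI / 4)
  (Hlim : Un_cv t (PI / 2))
  (k : nat) (hk : (1 <= k)%nat) :
  let v := fun n : nat => (cos (t n), sin (t n)) : pt in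
  let a : pt := (-2, 2) in
  let b : pt := (2, 2) in
  let C1 := fun x : pt => x = a in
  let C2 := fun x : pt => x = b in
  let C3 := clco (fun x : pt => exists n : nat, (1 <= n)%nat /\ x = v n) in
  let dk := pscal (/ pnorm (psub (v (S k)) (v k))) (psub (v (S k)) (v k)) in
  forall s : R, 0 <= s < 1 ->
    let c := padd (pscal (1 - s) (v k)) (pscal s (v (S k))) in
    let eps := 1 + dot (psub b c) dk / dot (psub a c) dk in
    dot (psub a c) dk <> 0 /\ 0 < eps < 1 /\
    exists u1 u2 u3 : pt, eps_cycle_support C1 C2 C3 eps u1 u2 u3 a b c.
Proof.
  intros v a b C1 C2 C3 dk s hs c eps.
  pose proof PI_RGT_0 as hPI.
  pose proof (t_bounds t Hinc H1 Hlim) as Tb.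
  destruct (Tb k hk) as [Tk1 Tk2].
  destruct (Tb (S k) ltac:(lia)) as [Tq1 Tq2].
  assert (Hkk : t k < t (S k)) by (apply Hinc; lia).
  set (p1 := cos (t k)) in *. set (p2 := sin (t k)) in *.
  set (q1 := cos (t (S k))) in *. set (q2 := sin (t (S k))) in *.
  assert (hq1p1 : q1 < p1) by (apply cos_decreasing_1; lra).
  assert (hp2q2 : p2 < q2) by (apply sin_increasing_1; lra).
  assert (hp1p2 : p1 <= p2) by (apply cos_le_sin; lra).
  assert (hq1 : 0 < q1) by (apply cos_gt_0; lra).
  assert (hp : p2 * p2 + p1 * p1 = 1) by (pose proof (sin2_cos2 (t k)); unfold Rsqr in *; auto).
  assert (hq : q2 * q2 + q1 * q1 = 1) by (pose proof (sin2_cos2 (t (S k))); unfold Rsqr in *; auto).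
  set (e := p1 - q1). set (f := q2 - p2).
  assert (he : 0 < e) by (unfold e; lra).
  assert (hf : 0 < f) by (unfold f; lra).
  assert (hpp : q1 * q2 < p1 * p2).
  { assert (h1 : (q1*q2)*(q1*q2) < (p1*p2)*(p1*p2)).
    { replace ((q1*q2)*(q1*q2)) with (q1*q1*(1 - q1*q1)) by nra.
      replace ((p1*p2)*(p1*p2)) with (p1*p1*(1 - p1*p1)) by nra.
      assert (p1*p1 <= 1/2) by nra. assert (q1*q1 < p1*p1) by nra. nra. }
    nra. }
  assert (hef : f < e).
  { unfold e, f. assert (q1 + q2 < p1 + p2) by nra. lra. }
  set (c1 := (1 - s) * p1 + s * q1). set (c2 := (1 - s) * p2 + s * q2).
  assert (hp1 : p1 <= 1) by nra.
  assert (hq2 : q2 <= 1) by nra.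
  assert (hc1 : 0 < c1 <= 1) by (unfold c1; nra).
  assert (hc2 : c2 <= 1) by (unfold c2; nra).
  assert (hc12 : c1 <= c2) by (unfold c1, c2; nra).
  set (al := e * (2 + c1) + f * (2 - c2)).
  set (be := - e * (2 - c1) + f * (2 - c2)).
  assert (hal : 0 < al) by (unfold al; nra).
  assert (hbe : be < 0).
  { unfold be. replace (- e * (2 - c1) + f * (2 - c2)) with
      (-((e - f) * (2 - c1) + f * (c2 - c1))) by ring. nra. }
  assert (halbe : 0 < al + be) by (unfold al, be; nra).
  set (L := pnorm (psub (v (S k)) (v k))).
  assert (hL : 0 < L).
  { unfold L, pnorm. apply sqrt_lt_R0. unfold dot, psub, v; simpl. fold p1 p2 q1 q2. nra. }
  assert (HA : dot (psub a c) dk = al / L).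
  { unfold dk, c, a. fold L. unfold dot, psub, padd, pscal, v; simpl. fold p1 p2 q1 q2.
    unfold al, c1, c2, e, f. field. lra. }
  assert (HB : dot (psub b c) dk = be / L).
  { unfold dk, c, b. fold L. unfold dot, psub, padd, pscal, v; simpl. fold p1 p2 q1 q2.
    unfold be, c1, c2, e, f. field. lra. }
  assert (Heps : eps = 1 + be / al).
  { unfold eps. rewrite HA, HB. field. lra. }
  set (r := - be / al).
  assert (hr : 0 < r < 1).
  { unfold r. split.
    - unfold Rdiv. apply Rmult_lt_0_compat. lra. apply Rinv_0_lt_compat; lra.
    - apply (Rmult_lt_reg_r al); auto. unfold Rdiv. rewrite Rmult_assoc, Rinv_l; lra. }
  assert (Heps2 : eps = 1 - r) by (rewrite Heps; unfold r; field; lra).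
  split.
  { rewrite HA. unfold Rdiv. apply Rmult_integral_contrapositive_currified. lra.
    apply Rinv_neq_0_compat. lra. }
  split. { rewrite Heps2. lra. }
  set (g := / (1 + r + r * r)).
  assert (hg : 0 < g) by (unfold g; apply Rinv_0_lt_compat; nra).
  set (x := pscal g (padd (psub b c) (pscal r (psub a c)))).
  set (u2 := padd c x).
  set (u3 := padd c (pscal r x)).
  set (u1 := padd a (pscal r (psub u3 a))).
  exists u1, u2, u3.
  assert (Ec : c = (c1, c2)).
  { unfold c, padd, pscal, v; simpl. reflexivity. }
  split. { rewrite Heps2. lra. }
  split. { split. reflexivity. intros q ->. lra. }
  split. { split. reflexivity. intros q ->. lra. }
  split.
  { apply proj_lemma.
    - intros C hconv hcl hgen. unfold c. apply hconv.
      + apply hgen. exists k. auto.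
      + apply hgen. exists (S k). split; auto.
      + lra.
    - intros q hq3. apply hq3. apply half_convex. apply half_closed.
      intros y [n [hn ->]].
      destruct (Tb n hn) as [Tn1 Tn2].
      assert (hcase : t n <= t k \/ t (S k) <= t n).
      { destruct (Nat.le_gt_cases n k).
        - left. apply t_mono; auto.
        - right. apply t_mono; auto. }
      pose proof (trig_ineq (t k) (t (S k)) (t n) Tk1 Hkk Tq2 (conj Tn1 Tn2) hcase) as Htr.
      fold p1 p2 q1 q2 in Htr.
      set (w1 := cos (t n)) in *. set (w2 := sin (t n)) in *.
      set (Y1 := (2 - c1) + r * (-2 - c1)).
      set (Y2 := (2 - c2) + r * (2 - c2)).
      assert (Ex : x = (g * Y1, g * Y2)).
      { unfold x. rewrite Ec. unfold a, b, pscal, padd, psub; simpl. unfold Y1, Y2. f_equal; ring. }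
      assert (Ev : v n = (w1, w2)) by reflexivity.
      rewrite Ex, Ev, Ec. unfold dot, psub; simpl.
      assert (hYD : Y1 * (q1 - p1) + Y2 * (q2 - p2) = 0).
      { unfold Y1, Y2, r. fold e f. replace (q1 - p1) with (- e) by (unfold e; ring).
        fold f. unfold al, be in *. field. lra. }
      assert (hYP : 0 < Y1 * f + Y2 * e).
      { unfold Y1, Y2.
        replace ((2 - c1 + r * (-2 - c1)) * f + (2 - c2 + r * (2 - c2)) * e) with
          ((1 - r) * ((2 - c1) * f + (2 - c2) * e) + r * (-2 * c1 * f + 2 * (2 - c2) * e)) by ring.
        assert (0 < (2 - c1) * f + (2 - c2) * e) by nra.
        assert (0 < -2 * c1 * f + 2 * (2 - c2) * e) by nra.
        nra. }
      assert (hPz : f * (w1 - c1) + e * (w2 - c2) <= 0).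
      { assert (f * c1 + e * c2 = p1 * q2 - p2 * q1) by (unfold f, e, c1, c2; ring).
        unfold f, e in *. nra. }
      assert (Hid : (f * f + e * e) * (Y1 * (w1 - c1) + Y2 * (w2 - c2)) =
         (Y1 * f + Y2 * e) * (f * (w1 - c1) + e * (w2 - c2)) +
         (Y1 * (q1 - p1) + Y2 * (q2 - p2)) * ((q1 - p1) * (w1 - c1) + (q2 - p2) * (w2 - c2))).
      { replace (q1 - p1) with (- e) by (unfold e; ring). fold f. ring. }
      rewrite hYD in Hid.
      assert (Hm : (Y1 * f + Y2 * e) * (f * (w1 - c1) + e * (w2 - c2)) <= 0).
      { rewrite <- (Rmult_0_r (Y1 * f + Y2 * e)). apply Rmult_le_compat_l; lra. }
      rewrite Rmult_0_l, Rplus_0_r in Hid.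
      assert (HPP : 0 < f * f + e * e) by nra.
      assert (Y1 * (w1 - c1) + Y2 * (w2 - c2) <= 0).
      { destruct (Rle_dec (Y1 * (w1 - c1) + Y2 * (w2 - c2)) 0) as [hh|hh]; auto.
        exfalso. assert (0 < (f * f + e * e) * (Y1 * (w1 - c1) + Y2 * (w2 - c2))) by (apply Rmult_lt_0_compat; lra). lra. }
      nra. }
  rewrite Heps2.
  split; [| split].
  - unfold u1, u3, u2. rewrite Ec. unfold padd, pscal, psub; simpl. f_equal; ring.
  - unfold u2, u1, u3, x, g. rewrite Ec. unfold a, b, padd, pscal, psub; simpl.
    f_equal; field; nra.
  - unfold u3, u2. rewrite Ec. unfold padd, pscal, psub; simpl. f_equal; ring.
Qed.
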